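(* Let $X\in\mathbb{R}^{n\times p}$ with $n>p$ and $X^TX$ invertible, let $Y=({\bf y}_1,\dots,{\bf y}_r)\in\mathbb{R}^{n\times r}$ with columns ${\bf y}_c\in\mathbb{R}^n$, let $D=(D_1,\ldots,D_Q)$ be a fixed partition of $\{1,\ldots,r\}$, and let $\gamma\ge 0$ be fixed. Let $\dot{\boldsymbol\beta}_c=(X^TX)^{-1}X^T{\bf y}_c$ be the ordinary least squares estimate for response $c$, $c=1,\dots,r$, and let $\bar B=(\bar{\boldsymbol\beta}_1,\ldots,\bar{\boldsymbol\beta}_r)\in\mathbb{R}^{p\times r}$ be the minimizer over $B=(\boldsymbol\beta_1,\dots,\boldsymbol\beta_r)\in\mathbb{R}^{p\times r}$ of $$\frac{1}{2n}\sum_{i=1}^n\sum_{c=1}^r (y_{ic}-{\bf x}_i^T\boldsymbol\beta_c)^2+\frac{\gamma}{2n}\sum_{q=1}^Q\frac{1}{|D_q|}\sum_{l,m\in D_q}\|X(\boldsymbol\beta_l-\boldsymbol\beta_m)\|_2^2$$ (this is the objective with lasso parameter $\delta=0$). Then for every $q$ and every $l\in D_q$, $$\bar{\boldsymbol\beta}_l=\dot{\boldsymbol\beta}_l+\frac{2\gamma}{(1+2\gamma)|D_q|}\sum_{c\in D_q,\,c\neq l}(\dot{\boldsymbol\beta}_c-\dot{\boldsymbol\beta}_l).$$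
   Context: ${\bf x}_i^T$ denotes the $i$th row of $X$ and $y_{ic}$ the $(i,c)$ entry of $Y$. The inner sum $\sum_{l,m\in D_q}$ runs over all ordered pairs $(l,m)$ with $l,m\in D_q$. Standing assumptions of the paper: the columns of $Y$ and of $X$ are centered ($\sum_i y_{ik}=0$, $\sum_i x_{ij}=0$) and $\sum_i x_{ij}^2\le n$. $|D_q|$ is the cardinality of $D_q$. *)

(* Defs.v *)
From HB Require Import structures.
From mathcomp Require Import all_boot all_order all_algebra.
Set Implicit Arguments. Unset Strict Implicit. Unset Printing Implicit Defensive.
Import Order.TTheory GRing.Theory Num.Theory.
Local Open Scope ring_scope.

Definition sqnorm (R : realFieldType) (n : nat) (v : 'cV[R]_n) : R :=
  \sum_(i < n) v i 0 ^+ 2.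

Definition ols (R : realFieldType) (n p r : nat)
  (X : 'M[R]_(n, p)) (Y : 'M[R]_(n, r)) : 'M[R]_(p, r) :=
  invmx (X^T *m X) *m X^T *m Y.

Definition objective (R : realFieldType) (n p r : nat)
  (X : 'M[R]_(n, p)) (Y : 'M[R]_(n, r)) (P : {set {set 'I_r}}) (gamma : R)
  (B : 'M[R]_(p, r)) : R :=
  (2 * n%:R)^-1 * \sum_(i < n) \sum_(c < r) (Y i c - (X *m B) i c) ^+ 2
  + gamma / (2 * n%:R) *
    \sum_(D in P) (#|D|%:R)^-1 *
      \sum_(l in D) \sum_(m in D) sqnorm (X *m (col l B - col m B)).

(* Main.v *)
Require Import Defs.
From HB Require Import structures.
From mathcomp Require Import all_boot all_order all_algebra.
From mathcomp Require Import ring lra.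
Import Order.TTheory GRing.Theory Num.Theory.
Set Implicit Arguments. Unset Strict Implicit. Unset Printing Implicit Defensive.
Local Open Scope ring_scope.

Section Aux.
Variable R : realFieldType.

Definition dotv (m : nat) (u v : 'cV[R]_m) : R := (u^T *m v) 0 0.

Lemma dotvE m (u v : 'cV[R]_m) : dotv u v = \sum_i u i 0 * v i 0.
Proof. by rewrite /dotv mxE; apply: eq_bigr => i _; rewrite mxE. Qed.

Lemma dotvC m (u v : 'cV[R]_m) : dotv u v = dotv v u.
Proof. by rewrite !dotvE; apply: eq_bigr => i _; rewrite mulrC. Qed.

Lemma dotvDl m (u w v : 'cV[R]_m) : dotv (u + w) v = dotv u v + dotv w v.
Proof. by rewrite !dotvE -big_split; apply: eq_bigr => i _; rewrite mxE mulrDl. Qed.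

Lemma dotvNl m (u v : 'cV[R]_m) : dotv (- u) v = - dotv u v.
Proof. by rewrite !dotvE -sumrN; apply: eq_bigr => i _; rewrite mxE mulNr. Qed.

Lemma dotvBl m (u w v : 'cV[R]_m) : dotv (u - w) v = dotv u v - dotv w v.
Proof. by rewrite dotvDl dotvNl. Qed.

Lemma dotvDr m (u w v : 'cV[R]_m) : dotv v (u + w) = dotv v u + dotv v w.
Proof. by rewrite dotvC dotvDl !(dotvC v). Qed.

Lemma dotvBr m (u w v : 'cV[R]_m) : dotv v (u - w) = dotv v u - dotv v w.
Proof. by rewrite dotvC dotvBl !(dotvC v). Qed.

Lemma dotvMnl m (u v : 'cV[R]_m) k : dotv (u *+ k) v = dotv u v *+ k.
Proof.
elim: k => [|k IH]; first by rewrite !mulr0n dotvE big1 // => i _; rewrite mxE mul0r.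
by rewrite !mulrS dotvDl IH.
Qed.

Lemma dotv_suml m (I : finType) (A : pred I) (F : I -> 'cV[R]_m) v :
  dotv (\sum_(i in A) F i) v = \sum_(i in A) dotv (F i) v.
Proof.
rewrite dotvE; under eq_bigr do rewrite summxE mulr_suml.
rewrite exchange_big /=; apply: eq_bigr => i _; by rewrite dotvE.
Qed.

Lemma dotvNr m (u v : 'cV[R]_m) : dotv v (- u) = - dotv v u.
Proof. by rewrite dotvC dotvNl dotvC. Qed.

Lemma dotv0l m (v : 'cV[R]_m) : dotv 0 v = 0.
Proof. by rewrite dotvE big1 // => i _; rewrite mxE mul0r. Qed.

Lemma dotv_mul m k (w : 'cV[R]_m) (X : 'M[R]_(m, k)) h :
  dotv w (X *m h) = dotv (X^T *m w) h.
Proof. by rewrite /dotv trmx_mul trmxK mulmxA. Qed.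

Lemma sqnorm_dot m (v : 'cV[R]_m) : sqnorm v = dotv v v.
Proof. by rewrite /sqnorm dotvE; apply: eq_bigr => i _; rewrite expr2. Qed.

Lemma sqnormD m (x z : 'cV[R]_m) :
  sqnorm (x + z) = sqnorm x + 2 * dotv x z + sqnorm z.
Proof.
rewrite !sqnorm_dot dotvDl !dotvDr (dotvC z x); ring.
Qed.

Lemma sqnormN m (x : 'cV[R]_m) : sqnorm (- x) = sqnorm x.
Proof. by rewrite !sqnorm_dot dotvNl dotvC dotvNl opprK. Qed.

Lemma sqnorm_ge0 m (x : 'cV[R]_m) : 0 <= sqnorm x.
Proof. by apply: sumr_ge0 => i _; apply: sqr_ge0. Qed.

Lemma sqnorm_eq0 m (x : 'cV[R]_m) : sqnorm x = 0 -> x = 0.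
Proof.
move=> H; apply/matrixP => i j; rewrite ord1 mxE.
have := psumr_eq0P (fun i _ => sqr_ge0 (x i 0)) H (i:=i) isT.
by move/eqP; rewrite sqrf_eq0 => /eqP.
Qed.

Lemma block_id m (I : finType) (D : {set I}) (a e : I -> 'cV[R]_m) :
  \sum_(l in D) \sum_(m0 in D) dotv (a l - a m0) (e l - e m0) =
  2 * \sum_(l in D) dotv (a l *+ #|D| - \sum_(m0 in D) a m0) (e l).
Proof.
under eq_bigr do under eq_bigr do rewrite dotvBl !dotvBr.
under eq_bigr => i _ do rewrite !sumrB sumr_const.
under [in RHS]eq_bigr => i _ do rewrite dotvBl dotvMnl dotv_suml.
rewrite !sumrB sumr_const -!sumrMnl.
rewrite [X in _ - X - _](exchange_big _ _ _ _ _ _) /=.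
move: (\sum_(i in D) dotv (a i) (e i)) (\sum_(j in D) \sum_(i in D) dotv (a i) (e j)) => x y.
rewrite -mulr_natr; ring.
Qed.

Lemma dotvZl m a (u v : 'cV[R]_m) : dotv (a *: u) v = a * dotv u v.
Proof. by rewrite !dotvE mulr_sumr; apply: eq_bigr => i _; rewrite mxE mulrA. Qed.

Lemma mulmxMn m k q (A : 'M[R]_(m, k)) (B : 'M[R]_(k, q)) t :
  A *m (B *+ t) = (A *m B) *+ t.
Proof. by elim: t => [|t IH]; rewrite ?mulr0n ?mulmx0 // !mulrS mulmxDr IH. Qed.

Lemma mxMnE m q (B : 'M[R]_(m, q)) t i j : (B *+ t) i j = B i j *+ t.
Proof. by elim: t => [|t IH]; rewrite ?mulr0n ?mxE // !mulrS mxE IH. Qed.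

Lemma vec_alg m (I : finType) (D : {set I}) (b u : I -> 'cV[R]_m) (g : R) c :
  0 <= g -> c \in D ->
  (forall x, u x = b x + (2 * g / ((1 + 2 * g) * #|D|%:R)) *: \sum_(m0 in D | m0 != x) (b m0 - b x)) ->
  b c - (u c + (g * (#|D|%:R)^-1 * 2) *: (u c *+ #|D| - \sum_(m0 in D) u m0)) = 0.
Proof.
move=> g0 cD uE; set k := #|D|.
have k0 : k%:R != 0 :> R by rewrite pnatr_eq0 -lt0n; apply/card_gt0P; exists c.
have g1 : 1 + 2 * g != 0 by rewrite gt_eqF // ltr_wpDr ?mulr_ge0.
set S := \sum_(m0 in D) b m0.
have Hs x : x \in D -> \sum_(m0 in D | m0 != x) (b m0 - b x) = S - b x *+ k.
  move=> xD; rewrite -sumr_const -sumrB.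
  by rewrite [RHS](bigD1 x) //= subrr add0r.
have Hu : \sum_(m0 in D) u m0 = S.
  rewrite (eq_bigr (fun x => b x + (2 * g / ((1 + 2 * g) * k%:R)) *: (S - b x *+ k))); last first.
    by move=> x xD; rewrite uE Hs.
  rewrite big_split /= -scaler_sumr sumrB sumr_const sumrMnl subrr scaler0 addr0 //.
rewrite Hu uE Hs //.
apply/matrixP => i j; rewrite !(mxE, mxMnE).
set K := k%:R in k0 *; have E x : x *+ k = x * K by rewrite /K mulr_natr.
rewrite !E; move: (b c i j) (S i j) => x y; clear -k0 g1; field; by rewrite k0 g1.
Qed.

End Aux.

Theorem theorem1 (R : realFieldType) (n p r : nat)
  (X : 'M[R]_(n, p)) (Y : 'M[R]_(n, r)) (P : {set {set 'I_r}}) (gamma : R)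
  (Bbar : 'M[R]_(p, r)) :
  (p < n)%N ->
  X^T *m X \in unitmx ->
  partition P [set: 'I_r] ->
  0 <= gamma ->
  (forall k : 'I_r, \sum_(i < n) Y i k = 0) ->
  (forall j : 'I_p, \sum_(i < n) X i j = 0) ->
  (forall j : 'I_p, \sum_(i < n) X i j ^+ 2 <= n%:R) ->
  (forall B : 'M[R]_(p, r), objective X Y P gamma Bbar <= objective X Y P gamma B) ->
  forall D, D \in P -> forall l, l \in D ->
    col l Bbar =
      col l (ols X Y) +
      (2 * gamma / ((1 + 2 * gamma) * #|D|%:R)) *:
        \sum_(c in D | c != l) (col c (ols X Y) - col l (ols X Y)).
Proof.
move=> ltpn Gu partP g0 _ _ _ opt D DP l lD.
case/and3P: partP => /eqP covP trivP _.
set G := X^T *m X.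
set beta := ols X Y.
pose ub (E : {set 'I_r}) (c : 'I_r) : 'cV[R]_p :=
  col c beta + (2 * gamma / ((1 + 2 * gamma) * #|E|%:R)) *:
        \sum_(m in E | m != c) (col m beta - col c beta).
pose U : 'M[R]_(p, r) := \matrix_(i, c) ub (pblock P c) c i 0.
have colU E c : E \in P -> c \in E -> col c U = ub E c.
  move=> EP cE; apply/matrixP => i j; rewrite !mxE ord1 (def_pblock trivP EP cE) //.
have colD (A B : 'M[R]_(p, r)) c : col c (A + B) = col c A + col c B.
  by apply/matrixP => i j; rewrite !mxE.
have colXM (B : 'M[R]_(p, r)) c : col c (X *m B) = X *m col c B.
  by rewrite !colE mulmxA.
pose Phi (E : {set 'I_r}) (B : 'M[R]_(p, r)) :=
  (2 * n%:R)^-1 * \sum_(c in E) sqnorm (col c Y - X *m col c B) +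
  gamma / (2 * n%:R) * ((#|E|%:R)^-1 *
    \sum_(l in E) \sum_(m in E) sqnorm (X *m (col l B - col m B))).
have objE B : objective X Y P gamma B = \sum_(E in P) Phi E B.
  rewrite /objective big_split /= -!mulr_sumr; congr (_ * _ + _).
  rewrite -(@big_trivIset _ _ _ _ P (fun c => sqnorm (col c Y - X *m col c B)) trivP) covP.
  rewrite exchange_big /=; apply: eq_big => [c|c _]; first by rewrite in_setT.
  rewrite /sqnorm; apply: eq_bigr => i _; rewrite -colXM !mxE //.
set H := Bbar - U.
pose Psi (E : {set 'I_r}) (B : 'M[R]_(p, r)) :=
  (2 * n%:R)^-1 * \sum_(c in E) sqnorm (X *m col c B) +
  gamma / (2 * n%:R) * ((#|E|%:R)^-1 *
    \sum_(l in E) \sum_(m in E) sqnorm (X *m (col l B - col m B))).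
have dec E : E \in P -> Phi E (U + H) = Phi E U + Psi E H.
  move=> EP.
  have K : \sum_(c in E) dotv (col c Y - X *m col c U) (X *m col c H) =
    gamma * (#|E|%:R)^-1 * \sum_(l in E) \sum_(m in E)
       dotv (X *m (col l U - col m U)) (X *m (col l H - col m H)).
    under [in RHS]eq_bigr do under eq_bigr do rewrite !mulmxBr.
    rewrite (block_id E (fun c => X *m col c U) (fun c => X *m col c H)) mulrA mulr_sumr.
    apply: eq_bigr => c cE.
    apply/eqP; rewrite -subr_eq0 -dotvZl -dotvBl dotv_mul.
    suff -> : X^T *m (col c Y - X *m col c U -
             (gamma / #|E|%:R * 2) *:
             (X *m col c U *+ #|E| - \sum_(m0 in E) X *m col m0 U)) = 0 by rewrite dotv0l.
    have -> : col c Y - X *m col c U -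
             (gamma / #|E|%:R * 2) *:
             (X *m col c U *+ #|E| - \sum_(m0 in E) X *m col m0 U) =
       col c Y - X *m (col c U + (gamma / #|E|%:R * 2) *:
             (col c U *+ #|E| - \sum_(m0 in E) col m0 U)).
      by rewrite mulmxDr -scalemxAr mulmxBr mulmxMn mulmx_sumr opprD addrA.
    rewrite mulmxBr mulmxA -/G.
    have -> : X^T *m col c Y = G *m col c beta.
      by rewrite /beta /ols !colE -!mulmxA (mulmxA X^T X) mulKVmx.
    rewrite -mulmxBr.
    rewrite (colU E c) // (eq_bigr (fun m => ub E m)); last by move=> m mE; rewrite (colU E).
    by rewrite (vec_alg (b := fun m => col m beta) (u := ub E) g0 cE) ?mulmx0.
  have R1 : \sum_(c in E) sqnorm (col c Y - X *m col c (U + H)) =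
     \sum_(c in E) sqnorm (col c Y - X *m col c U)
     - 2 * \sum_(c in E) dotv (col c Y - X *m col c U) (X *m col c H)
     + \sum_(c in E) sqnorm (X *m col c H).
    rewrite mulr_sumr -sumrB -!big_split /=; apply: eq_bigr => c _.
    have -> : col c Y - X *m col c (U + H) = (col c Y - X *m col c U) + - (X *m col c H).
      by rewrite colD mulmxDr opprD addrA.
    rewrite sqnormD sqnormN dotvNr; ring.
  have R2 : \sum_(a in E) \sum_(b in E) sqnorm (X *m (col a (U + H) - col b (U + H))) =
     \sum_(a in E) \sum_(b in E) sqnorm (X *m (col a U - col b U))
     + 2 * \sum_(a in E) \sum_(b in E) dotv (X *m (col a U - col b U)) (X *m (col a H - col b H))
     + \sum_(a in E) \sum_(b in E) sqnorm (X *m (col a H - col b H)).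
    rewrite mulr_sumr -!big_split /=; apply: eq_bigr => a _.
    rewrite mulr_sumr -!big_split /=; apply: eq_bigr => b _.
    have -> : X *m (col a (U + H) - col b (U + H)) = X *m (col a U - col b U) + X *m (col a H - col b H).
      by rewrite !colD opprD addrACA mulmxDr.
    by rewrite sqnormD.
  rewrite /Phi /Psi R1 R2 K.
  move: (\sum_(c in E) _) => s1.
  move: (\sum_(c in E) sqnorm (col c Y - X *m col c U)) (\sum_(c in E) sqnorm (X *m col c H)) => s2 s3.
  move: (\sum_(a in E) \sum_(b in E) sqnorm (X *m (col a U - col b U))) => s4.
  move: (\sum_(a in E) \sum_(b in E) sqnorm (X *m (col a H - col b H))) => s5.
  ring.
have UH : U + H = Bbar by rewrite /H addrC subrK.
have n0 : 0 < 2 * n%:R :> R.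
  by rewrite mulr_gt0 // ltr0n; apply: leq_ltn_trans ltpn.
have sumPsi : \sum_(E in P) Psi E H <= 0.
  have := opt U; rewrite -{1}UH !objE (eq_bigr _ dec) big_split /=.
  move=> h; lra.
have A E : E \in P -> (2 * n%:R)^-1 * \sum_(c in E) sqnorm (X *m col c H) <= Psi E H.
  move=> _; rewrite /Psi lerDl; apply: mulr_ge0; first by rewrite divr_ge0 // ltW.
  apply: mulr_ge0; first by rewrite invr_ge0 ler0n.
  by apply: sumr_ge0 => a _; apply: sumr_ge0 => b _; apply: sqnorm_ge0.
have nn (E : {set 'I_r}) : 0 <= (2 * n%:R)^-1 * \sum_(c in E) sqnorm (X *m col c H).
  apply: mulr_ge0; first by rewrite invr_ge0 ltW.
  by apply: sumr_ge0 => c _; apply: sqnorm_ge0.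
have B : \sum_(E in P) (2 * n%:R)^-1 * \sum_(c in E) sqnorm (X *m col c H) = 0.
  apply/le_anti/andP; split; last by apply: sumr_ge0 => E _.
  by apply: le_trans sumPsi; apply: ler_sum.
have := psumr_eq0P (fun E _ => nn E) B DP.
move/eqP; rewrite mulf_eq0 invr_eq0 (gt_eqF n0) /= => /eqP S0.
have := psumr_eq0P (fun c _ => sqnorm_ge0 (X *m col c H)) S0 lD => /sqnorm_eq0 XH0.
have h0 : col l H = 0.
  by rewrite -(mulKmx Gu (col l H)) -mulmxA XH0 !mulmx0.
by rewrite -UH colD h0 addr0 (colU D l DP lD).
Qed.
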